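(* Let $M$ be a finite set and $q,\eta\in\Delta M$. Then $q$ can be induced from $\eta$ if and only if (1) $\mathrm{supp}(\eta)\subseteq\mathrm{supp}(q)$, and (2) $\mathbb{E}_\eta[\log q]=\mathbb{E}_q[\log q]$, i.e. $\sum_m\eta_m\log q_m=\sum_m q_m\log q_m$.
   Context: A belief $q\in\Delta M$ can be induced from $\eta\in\Delta M$ if there exists a set $\mathcal{F}\subseteq\{f:M\to\mathbb{R}\}$ such that $q$ is the unique maximizer of the Shannon entropy $\mathcal{H}(q')=-\sum_mq'_m\log q'_m$ over $\Delta_{\mathcal{D}}=\{q'\in\Delta M:\sum_mq'_mf(m)=\sum_m\eta_mf(m)\ \forall f\in\mathcal{F}\}$. Convention $0\log0=0$; sums are over the support where terms are otherwise undefined. *)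

(* Defs.v *)
From HB Require Import structures.
From mathcomp Require Import all_boot all_order all_algebra.
From mathcomp Require Import all_classical all_reals exp.
Set Implicit Arguments. Unset Strict Implicit. Unset Printing Implicit Defensive.
Import Order.TTheory GRing.Theory Num.Theory.
Local Open Scope ring_scope.

Definition simplex (R : realType) (M : finType) (p : M -> R) : Prop :=
  (forall m, 0 <= p m) /\ \sum_(m : M) p m = 1.

Definition supp (R : realType) (M : finType) (p : M -> R) : M -> Prop :=
  fun m => 0 < p m.

(* Shannon entropy, with the convention 0 log 0 = 0 (sum over support). *)
Definition entropy (R : realType) (M : finType) (p : M -> R) : R :=
  - \sum_(m : M | 0 < p m) p m * ln (p m).

Definition DeltaD (R : realType) (M : finType) (F : (M -> R) -> Prop)
    (eta : M -> R) (q' : M -> R) : Prop :=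
  simplex q' /\
  forall f, F f -> \sum_(m : M) q' m * f m = \sum_(m : M) eta m * f m.

Definition inducible (R : realType) (M : finType) (q eta : M -> R) : Prop :=
  exists F : (M -> R) -> Prop,
    DeltaD F eta q /\
    forall q', DeltaD F eta q' -> q' <> q -> entropy q' < entropy q.

(* Main.v *)
Require Import Defs.
From HB Require Import structures.
From mathcomp Require Import all_boot all_order all_algebra.
From mathcomp Require Import all_classical all_reals exp.
From mathcomp Require Import sequences ring lra.
Import Order.TTheory GRing.Theory Num.Theory.
Local Open Scope ring_scope.

Section Aux.
Variable R : realType.
Variable M : finType.
Implicit Types p q eta : M -> R.
Implicit Types x y : R.

Lemma lnle {z : R} : 0 < z -> 1 + ln z <= z.
Proof. move=> z0; rewrite -{2}(lnK (x:=z)) ?posrE //; exact: expR_ge1Dx. Qed.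

Lemma lnlt {z : R} : 0 < z -> z != 1 -> 1 + ln z < z.
Proof.
move=> z0 z1; rewrite -{2}(lnK (x:=z)) ?posrE //; apply: expR_gt1Dx.
by rewrite ln_eq0.
Qed.

Lemma gibbs_le x y : 0 <= x -> 0 <= y -> (y = 0 -> x = 0) ->
  x * (ln y - ln x) <= y - x.
Proof.
move=> x0 y0 hyx; have [->|xn0] := eqVneq x 0; first by rewrite mul0r subr0.
have xp : 0 < x by rewrite lt_def xn0.
have yp : 0 < y.
  by rewrite lt_def y0 andbT; apply/eqP => /hyx /eqP; rewrite (negbTE xn0).
have := lnle (divr_gt0 yp xp); rewrite ln_div ?posrE // => h.
have := ler_wpM2l (ltW xp) h; rewrite mulrDr mulr1 mulrCA mulfV ?mulr1; last by [].
lra.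
Qed.

Lemma gibbs_lt x y : 0 <= x -> 0 <= y -> (y = 0 -> x = 0) -> x != y ->
  x * (ln y - ln x) < y - x.
Proof.
move=> x0 y0 hyx nxy; have [x00|xn0] := eqVneq x 0.
  rewrite x00 mul0r subr0 lt_def y0 andbT; apply: contraNneq nxy => ->.
  by rewrite x00.
have xp : 0 < x by rewrite lt_def xn0.
have yp : 0 < y.
  by rewrite lt_def y0 andbT; apply/eqP => /hyx /eqP; rewrite (negbTE xn0).
have z1 : y / x != 1.
  apply: contra nxy => /eqP h; apply/eqP.
  by rewrite -(divfK xn0 y) h mul1r.
have := lnlt (divr_gt0 yp xp) z1; rewrite ln_div ?posrE // => h.
have := ltr_pM2l xp; move=> hh; have := h; rewrite -hh.
rewrite mulrDr mulr1 mulrCA mulfV ?mulr1; last by [].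
lra.
Qed.
Lemma sum_filt (a b : M -> R) :
  \sum_(m | 0 < b m) a m * ln (b m) = \sum_m a m * ln (b m).
Proof.
rewrite big_mkcond /=; apply: eq_bigr => m _; case: ifP => // /negbT.
by rewrite -leNgt => /ln0 ->; rewrite mulr0.
Qed.

Lemma entropyE p : entropy p = - \sum_m p m * ln (p m).
Proof. by rewrite /entropy sum_filt. Qed.

Lemma entropy_cmp (x y : M -> R) : simplex x -> simplex y -> (forall m, y m = 0 -> x m = 0) ->
  entropy x - entropy y <= \sum_m (y m - x m) * ln (y m).
Proof.
move=> [x0 x1] [y0 y1] hyx; rewrite !entropyE.
have h : \sum_m (- (x m * ln (x m)) + y m * ln (y m))
   <= \sum_m ((y m - x m) + (y m - x m) * ln (y m)).
  apply: ler_sum => m _; have := @gibbs_le _ _ (x0 m) (y0 m) (hyx m); lra.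
move: h; rewrite !big_split /= !sumrN x1 y1; lra.
Qed.

Lemma sum_line (t c : R) q eta (g : M -> R) :
  \sum_m (q m + t * (c * (eta m - q m))) * g m =
  \sum_m q m * g m + t * c * (\sum_m eta m * g m - \sum_m q m * g m).
Proof.
rewrite -sumrB mulr_sumr -big_split /=; apply: eq_bigr => m _; ring.
Qed.

Lemma sum_line1 (t c : R) q eta :
  \sum_m (q m + t * (c * (eta m - q m))) =
  \sum_m q m + t * c * (\sum_m eta m - \sum_m q m).
Proof.
rewrite -sumrB mulr_sumr -big_split /=; apply: eq_bigr => m _; ring.
Qed.

Lemma key F q eta (t c : R) :
  \sum_m eta m = 1 ->
  DeltaD F eta q ->
  (forall q', DeltaD F eta q' -> q' <> q -> entropy q' < entropy q) ->
  0 < t -> c != 0 ->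
  (exists m, eta m != q m) ->
  (forall m, 0 <= q m + t * (c * (eta m - q m))) ->
  (forall m, q m + t * (c * (eta m - q m)) = 0 -> q m = 0) ->
  \sum_m (c * (eta m - q m)) * ln (q m + t * (c * (eta m - q m))) <= 0 ->
  False.
Proof.
move=> eta1 [[q0 q1] hqF] hmax t0 c0 [m0 hm0] hnn hz hs.
pose q' := fun m => q m + t * (c * (eta m - q m)).
have hq' : simplex q'.
  by split => //; rewrite /q' sum_line1 q1 eta1 subrr mulr0 addr0.
have hD : DeltaD F eta q'.
  split => // f /hqF hf; by rewrite /q' sum_line hf subrr mulr0 addr0.
have hne : q' <> q.
  move=> /(congr1 (fun g => g m0)); rewrite /q' => /eqP.
  rewrite -subr_eq0 addrAC subrr add0r mulf_eq0 (gt_eqF t0) /= mulf_eq0 (negbTE c0) /=.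
  by rewrite subr_eq0 (negbTE hm0).
have := hmax _ hD hne.
have := @entropy_cmp q q' (conj q0 q1) hq' hz.
have -> : \sum_m (q' m - q m) * ln (q' m) =
   t * \sum_m (c * (eta m - q m)) * ln (q m + t * (c * (eta m - q m))).
  rewrite mulr_sumr; apply: eq_bigr => m _; rewrite /q'; ring.
have : t * \sum_m (c * (eta m - q m)) * ln (q m + t * (c * (eta m - q m))) <= 0.
  by rewrite pmulr_rle0.
lra.
Qed.
Lemma term_pos {q d t : R} : 0 < q -> -1 <= d -> d <= 1 -> 0 < t -> t <= q/2 ->
  q/2 <= q + t*d /\ d * ln (q + t*d) <= d * ln q + 2*t/q.
Proof.
move=> q0 d1 d2 t0 tq.
have hy : q/2 <= q + t*d.
  have : 0 <= t * (d + 1) by apply: mulr_ge0; lra.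
  lra.
split => //.
have y0 : 0 < q + t*d by lra.
set y := q + t*d.
have ey : y = q + t * d by [].
clearbody y. rewrite -ey in hy y0.
have h1 := @gibbs_le q y (ltW q0) (ltW y0) (fun e => False_ind _ (elimN eqP (lt0r_neq0 y0) e)).
have h2 := @gibbs_le y q (ltW y0) (ltW q0) (fun e => False_ind _ (elimN eqP (lt0r_neq0 q0) e)).
set L := ln y - ln q.
have hL : ln y = ln q + L by rewrite /L; ring.
have h2' : t * d <= y * L.
  have : y * (ln q - ln y) = - (y * L) by rewrite /L; ring.
  lra.
have h1' : q * L <= t * d by rewrite /L; lra.
clearbody L.
suff hm : q * (d * L) <= 2 * t.
  have : d * L <= 2 * t / q by rewrite ler_pdivlMr // mulrC.
  rewrite hL; lra.
have td : t * (d * d) <= t.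
  have : 0 <= t * (1 - d * d) by apply: mulr_ge0; nra.
  lra.
have [dp|dn] := leP 0 d.
  have : 0 <= d * (t * d - q * L) by apply: mulr_ge0 => //; lra.
  nra.
have : 0 <= (- d) * (y * L - t * d) by apply: mulr_ge0; lra.
move=> hh.
have [dL|dL] := leP (d * L) 0.
  have : q * (d * L) <= 0 by rewrite pmulr_rle0.
  lra.
have : 0 <= (2 * y - q) * (d * L) by apply: mulr_ge0; lra.
nra.
Qed.

Lemma term_zero {e t : R} : 0 <= e -> e <= 1 -> 0 < t -> t <= 1 ->
  e * ln (0 + t * e) <= e * ln t.
Proof.
move=> e0 e1 t0 t1; rewrite add0r.
have [->|en] := eqVneq e 0; first by rewrite !mul0r.
have ep : 0 < e by rewrite lt_def en.
rewrite lnM ?posrE // mulrDr.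
have : e * ln e <= 0 by rewrite pmulr_rle0 // ln_le0.
lra.
Qed.
Lemma simplex_le1 {p} m : simplex p -> p m <= 1.
Proof.
move=> [p0 p1]; rewrite -p1 (bigD1 m) //= lerDl; exact: sumr_ge0.
Qed.

Lemma simplex_ex {p} : simplex p -> exists m, 0 < p m.
Proof.
move=> [p0 p1]; case: (pselect (exists m, 0 < p m)) => // H; exfalso.
have : \sum_m p m <= 0.
  apply: sumr_le0 => m _; rewrite leNgt; apply/negP => h; apply: H; by exists m.
by rewrite p1 ler10.
Qed.

Definition Cq q := \sum_(m | 0 < q m) 2 / q m.

Lemma Cq_ge {q m} : (forall m, 0 <= q m) -> 0 < q m -> 2 / q m <= Cq q.
Proof.
move=> q0 qm; rewrite /Cq (bigD1 m) //= lerDl; apply: sumr_ge0 => i /andP [hi _].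
by rewrite divr_ge0 // ltW.
Qed.

Lemma Cq_gt0 {q} : simplex q -> 0 < Cq q.
Proof.
move=> hq; have [m qm] := simplex_ex hq.
apply: (lt_le_trans _ (Cq_ge hq.1 qm)); by rewrite divr_gt0.
Qed.

Lemma sum_if q (t : R) :
  \sum_m (if 0 < q m then 2 * t / q m else 0) = t * Cq q.
Proof.
rewrite /Cq mulr_sumr -big_mkcond /=; apply: eq_bigr => m _; ring.
Qed.

Lemma t_le {q} {t : R} {m} : simplex q -> 0 < q m -> 0 < t -> t * Cq q <= 1 -> t <= q m / 2.
Proof.
move=> hq qm t0 tC.
have h : t * (2 / q m) <= 1.
  apply: le_trans tC; apply: ler_wpM2l; [exact: ltW | exact: Cq_ge hq.1 qm].
have : 2 * t <= q m.
  by move: h; rewrite mulrA [t * 2]mulrC ler_pdivrMr // mul1r.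
lra.
Qed.

Lemma d_bound {q eta} m {c : R} : simplex q -> simplex eta -> -1 <= c <= 1 ->
  -1 <= c * (eta m - q m) /\ c * (eta m - q m) <= 1.
Proof.
move=> hq he /andP [c1 c2].
have := simplex_le1 m hq; have := simplex_le1 m he.
have := hq.1 m; have := he.1 m => h1 h2 h3 h4.
have : -1 <= eta m - q m <= 1 by apply/andP; split; lra.
move=> /andP [e1 e2].
split; nra.
Qed.

Lemma part2 F q eta (c : R) :
  simplex q -> simplex eta ->
  DeltaD F eta q ->
  (forall q', DeltaD F eta q' -> q' <> q -> entropy q' < entropy q) ->
  (forall m, 0 < eta m -> 0 < q m) ->
  (exists m, eta m != q m) -> c != 0 -> -1 <= c <= 1 ->
  0 <= \sum_m c * (eta m - q m) * ln (q m).
Proof.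
move=> hq he hD hmax hsupp hne c0 c1.
rewrite leNgt; apply/negP => A0.
set A := \sum_m c * (eta m - q m) * ln (q m) in A0.
have C0 := Cq_gt0 hq.
set tau := Num.min 1 (- A).
have tau0 : 0 < tau by rewrite lt_min ltr01 /= oppr_gt0.
have tau1 : tau <= 1 by rewrite ge_min lexx.
have tauA : tau <= - A by rewrite ge_min lexx orbT.
set t := tau / Cq q.
have t0 : 0 < t by rewrite divr_gt0.
have tC : t * Cq q = tau by rewrite /t mulfVK // gt_eqF.
have tq : forall m, 0 < q m -> t <= q m / 2.
  move=> m qm; apply: t_le => //; by rewrite tC.
have q0m : forall m, ~ 0 < q m -> q m = 0 /\ eta m = 0.
  move=> m hm; split.
    by apply/eqP; rewrite eq_le hq.1 andbT leNgt; apply/negP.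
  apply/eqP; rewrite eq_le he.1 andbT leNgt; apply/negP => /hsupp.
  exact: hm.
apply: (@key F q eta t c he.2 hD hmax t0 c0 hne).
- move=> m; case: (pselect (0 < q m)) => hm.
    have [d1 d2] := d_bound m hq he c1.
    have [h _] := term_pos hm d1 d2 t0 (tq m hm).
    apply: le_trans h; by rewrite divr_ge0 // ltW.
  by have [-> ->] := q0m m hm; rewrite subrr !mulr0 addr0.
- move=> m; case: (pselect (0 < q m)) => hm; last by have [-> _] := q0m m hm.
  have [d1 d2] := d_bound m hq he c1.
  have [h _] := term_pos hm d1 d2 t0 (tq m hm).
  move=> e; move: h; rewrite e => h.
  have : 0 < q m / 2 by rewrite divr_gt0.
  lra.
- apply: (@le_trans _ _ (\sum_m (c * (eta m - q m) * ln (q m) +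
            (if 0 < q m then 2 * t / q m else 0)))).
    apply: ler_sum => m _; case: (pselect (0 < q m)) => hm.
      have [d1 d2] := d_bound m hq he c1.
      have [_ h] := term_pos hm d1 d2 t0 (tq m hm).
      by rewrite hm; move: h; rewrite mulrA.
    have [-> ->] := q0m m hm; rewrite subrr !mulr0 !mul0r.
    by rewrite ltxx addr0.
  rewrite big_split /= sum_if tC -/A; lra.
Qed.
Lemma part1 F q eta m0 :
  simplex q -> simplex eta ->
  DeltaD F eta q ->
  (forall q', DeltaD F eta q' -> q' <> q -> entropy q' < entropy q) ->
  0 < eta m0 -> ~ 0 < q m0 -> False.
Proof.
move=> hq he hD hmax e0p hq0.
have q0m : forall m, ~ 0 < q m -> q m = 0.
  by move=> m hm; apply/eqP; rewrite eq_le hq.1 andbT leNgt; apply/negP.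
have qm0 := q0m m0 hq0.
set A := \sum_m 1 * (eta m - q m) * ln (q m).
set e0 := eta m0.
have C0 := Cq_gt0 hq.
set tau := Num.min 1 (Cq q * expR (- ((`|A| + 1) / e0))).
have tau0 : 0 < tau by rewrite lt_min ltr01 /= mulr_gt0 // expR_gt0.
have tau1 : tau <= 1 by rewrite ge_min lexx.
have tauE : tau <= Cq q * expR (- ((`|A| + 1) / e0)) by rewrite ge_min lexx orbT.
set t := tau / Cq q.
have t0 : 0 < t by rewrite divr_gt0.
have tC : t * Cq q = tau by rewrite /t mulfVK // gt_eqF.
have tq : forall m, 0 < q m -> t <= q m / 2.
  move=> m qm; apply: t_le => //; by rewrite tC.
have t1 : t <= 1.
  have [m1 hm1] := simplex_ex hq.
  have := tq m1 hm1; have := simplex_le1 m1 hq; lra.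
have tE : t <= expR (- ((`|A| + 1) / e0)).
  by rewrite /t ler_pdivrMr // mulrC.
have lnt : ln t <= - ((`|A| + 1) / e0).
  by rewrite -[X in _ <= X]expRK ler_ln ?posrE ?expR_gt0.
have hlt : e0 * ln t <= - (`|A| + 1).
  have := ler_wpM2l (ltW e0p) lnt.
  by rewrite mulrN [e0 * (_ / _)]mulrC divfK // gt_eqF.
have c1 : -1 <= (1 : R) <= 1 by rewrite lexx andbT; lra.
apply: (@key F q eta t 1 he.2 hD hmax t0 (oner_neq0 _)).
- exists m0; by rewrite qm0 gt_eqF.
- move=> m; case: (pselect (0 < q m)) => hm.
    have [d1 d2] := d_bound m hq he c1.
    have [h _] := term_pos hm d1 d2 t0 (tq m hm).
    apply: le_trans h; by rewrite divr_ge0 // ltW.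
  rewrite q0m // subr0 mul1r add0r; apply: mulr_ge0; [exact: ltW | exact: he.1].
- move=> m; case: (pselect (0 < q m)) => hm; last by rewrite q0m.
  have [d1 d2] := d_bound m hq he c1.
  have [h _] := term_pos hm d1 d2 t0 (tq m hm).
  move=> e; move: h; rewrite e => h.
  have : 0 < q m / 2 by rewrite divr_gt0.
  lra.
- apply: (@le_trans _ _ (\sum_m (1 * (eta m - q m) * ln (q m) +
            (if 0 < q m then 2 * t / q m else 0) +
            (if 0 < q m then 0 else eta m * ln t)))).
    apply: ler_sum => m _; case: (pselect (0 < q m)) => hm.
      have [d1 d2] := d_bound m hq he c1.
      have [_ h] := term_pos hm d1 d2 t0 (tq m hm).
      by rewrite hm addr0; move: h; rewrite mulrA.
    rewrite q0m // ltxx (ln0 (lexx 0)) mulr0 !add0r subr0 mul1r.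
    by have := term_zero (he.1 m) (simplex_le1 m he) t0 t1; rewrite add0r.
  rewrite !big_split /= sum_if tC -/A.
  have hs : \sum_m (if 0 < q m then 0 else eta m * ln t) <= e0 * ln t.
    rewrite (bigD1 m0) //= qm0 ltxx -/e0 -[X in _ <= X]addr0 lerD2l.
    apply: sumr_le0 => m _; case: ifP => // _.
    apply: mulr_ge0_le0; [exact: he.1 | exact: ln_le0].
  have := ler_norm A; lra.
Qed.
Lemma sum_lt (a b : M -> R) m0 : (forall m, a m <= b m) -> a m0 < b m0 ->
  \sum_m a m < \sum_m b m.
Proof.
move=> hab h0; rewrite (bigD1 m0) //= [X in _ < X](bigD1 m0) //=.
apply: ltr_leD => //; exact: ler_sum.
Qed.

Lemma backward q eta : simplex q -> simplex eta ->
  (forall m, 0 < eta m -> 0 < q m) ->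
  \sum_m eta m * ln (q m) = \sum_m q m * ln (q m) -> inducible q eta.
Proof.
move=> hq he hsupp hsum.
pose g := fun m => if 0 < q m then 0 else (1 : R).
have q0m : forall m, ~ 0 < q m -> q m = 0 /\ eta m = 0.
  move=> m hm; split.
    by apply/eqP; rewrite eq_le hq.1 andbT leNgt; apply/negP.
  apply/eqP; rewrite eq_le he.1 andbT leNgt; apply/negP => /hsupp.
  exact: hm.
have hg0 : forall p, (forall m, ~ 0 < q m -> p m = 0) -> \sum_m p m * g m = 0.
  move=> p hp; apply: big1 => m _; rewrite /g; case: ifP => h; first by rewrite mulr0.
  by rewrite hp ?mul0r // => h'; rewrite h' in h.
exists (fun f => f = (fun m => ln (q m)) \/ f = g); split.
  split => // f [->|->]; first by rewrite hsum.
  by rewrite !hg0 // => m hm; have [h1 h2] := q0m m hm; rewrite ?h1 ?h2.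
move=> q' [hq' hF] hne.
have hl := hF _ (or_introl erefl).
have hg := hF _ (or_intror erefl).
rewrite [in RHS]hg0 in hg; last by move=> m hm; have [_ ->] := q0m m hm.
have hz : forall m, q m = 0 -> q' m = 0.
  move=> m hm.
  have hnn : forall i, true -> 0 <= q' i * g i.
    move=> i _; rewrite /g; case: ifP => _; first by rewrite mulr0.
    by rewrite mulr1 hq'.1.
  by have := (psumr_eq0P hnn hg (i:=m) isT); rewrite /g hm ltxx mulr1.
have [m0 hm0] : exists m, q' m != q m.
  case: (pselect (exists m, q' m != q m)) => // H; exfalso; apply: hne.
  apply: funext => m; apply/eqP; apply/negPn/negP => h; apply: H; by exists m.
have := @sum_lt (fun m => q' m * (ln (q m) - ln (q' m))) (fun m => q m - q' m) m0.
have h1 : forall m, q' m * (ln (q m) - ln (q' m)) <= q m - q' m.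
  move=> m; apply: gibbs_le; [exact: hq'.1 | exact: hq.1 | exact: hz].
move=> /(_ h1 (gibbs_lt (q' m0) (q m0) (hq'.1 m0) (hq.1 m0) (hz m0) hm0)).
rewrite sumrB hq.2 hq'.2 subrr.
have -> : \sum_m q' m * (ln (q m) - ln (q' m)) =
   \sum_m q' m * ln (q m) - \sum_m q' m * ln (q' m).
  rewrite -sumrB; apply: eq_bigr => m _; ring.
rewrite hl hsum !entropyE; lra.
Qed.

Lemma main_aux q eta :
  simplex q -> simplex eta ->
  (inducible q eta <->
   ((forall m, supp eta m -> supp q m) /\
    \sum_(m : M | 0 < q m) eta m * ln (q m) =
    \sum_(m : M | 0 < q m) q m * ln (q m))).
Proof.
move=> hq he; split; last first.
  by move=> [hs hsum]; apply: backward => //; rewrite !sum_filt in hsum.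
move=> [F [hD hmax]].
have hsupp : forall m, supp eta m -> supp q m.
  move=> m he0; case: (pselect (0 < q m)) => // h; exfalso.
  exact: (@part1 F q eta m hq he hD hmax he0 h).
split => //; rewrite !sum_filt.
case: (pselect (exists m, eta m != q m)) => hne; last first.
  apply: eq_bigr => m _; congr (_ * _).
  by apply/eqP; apply/negPn/negP => h; apply: hne; exists m.
have E : forall c : R, \sum_m c * (eta m - q m) * ln (q m) =
   c * (\sum_m eta m * ln (q m) - \sum_m q m * ln (q m)).
  move=> c; rewrite -sumrB mulr_sumr; apply: eq_bigr => m _; ring.
have c1 : -1 <= (1 : R) <= 1 by rewrite lexx andbT; lra.
have c2 : -1 <= (-1 : R) <= 1 by rewrite lexx /=; lra.
have h1 := @part2 F q eta 1 hq he hD hmax hsupp hne (oner_neq0 _) c1.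
have h2 := @part2 F q eta (-1) hq he hD hmax hsupp hne (ltr0_neq0 (ltrN10 R)) c2.
by move: h1 h2; rewrite !E; lra.
Qed.
End Aux.

Theorem lemma2 (R : realType) (M : finType) (q eta : M -> R) :
  simplex q -> simplex eta ->
  (inducible q eta <->
   ((forall m, supp eta m -> supp q m) /\
    \sum_(m : M | 0 < q m) eta m * ln (q m) =
    \sum_(m : M | 0 < q m) q m * ln (q m))).
Proof. exact: main_aux. Qed.
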